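(* Let $\kappa>0$, $a>0$ and $0\le\gamma<\pi/2$. Then there exists a $\kappa$-cylindrical surface over the strip $\Omega=\{(x,y): |x|<a\}$ making contact angle $\gamma$ with the vertical plates $\{x=\pm a\}$. Precisely: there exists $u_0>0$ such that the solution $u=u(r;u_0)$ of $\frac{d}{dr}\big(u'/\sqrt{1+u'^2}\big)=\kappa u$, $u(0)=u_0$, $u'(0)=0$, is defined on $[0,a)$ and $\sin\psi(r)\to\cos\gamma$ as $r\to a$, where $\sin\psi=u'/\sqrt{1+u'^2}$.
   Context: The surface is $z=u(x)$, $(x,y)\in\Omega$, with $u$ even; it solves $\operatorname{div}\big(Du/\sqrt{1+|Du|^2}\big)=\kappa u$ in $\Omega$ and the Young boundary condition $\nu\cdot Du/\sqrt{1+|Du|^2}=\cos\gamma$ on $\partial\Omega$ ($\nu$ the exterior unit normal). *)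

(* Defs.v *)
From Stdlib Require Import Reals.
From Coquelicot Require Import Coquelicot.
Open Scope R_scope.

Definition sinpsi (du : R -> R) (r : R) : R := du r / sqrt (1 + (du r)^2).

Definition cyl_solution (kappa u0 a : R) (u du : R -> R) : Prop :=
  u 0 = u0 /\ du 0 = 0 /\
  (forall r, 0 <= r < a ->
     is_derive u r (du r) /\ is_derive (sinpsi du) r (kappa * u r)).

(* Main.v *)
Require Import Defs.
From Stdlib Require Import Reals Ranalysis5 Lra ClassicalEpsilon.
From Coquelicot Require Import Coquelicot.
Open Scope R_scope.
Definition Uf (k v t : R) := sqrt (v^2 + 2/k*(1 - cos t)).
Definition hf k v t := cos t / (k * Uf k v t).
Definition Ff (k v x : R) : R := RInt (hf k v) 0 x.

Lemma one_m_cos t : 0 <= 1 - cos t.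
Proof. pose proof (COS_bound t); lra. Qed.

Lemma arg_pos k v t : 0 < k -> 0 < v -> 0 < v^2 + 2/k*(1 - cos t).
Proof. intros hk hv. pose proof (one_m_cos t).
 assert (0 <= 2/k) by (apply Rlt_le; apply Rdiv_lt_0_compat; lra).
 assert (0 <= 2/k*(1-cos t)) by (apply Rmult_le_pos; lra). nra. Qed.

Lemma Uf_ge k v t : 0 < k -> 0 < v -> v <= Uf k v t.
Proof. intros hk hv. unfold Uf. rewrite <- (sqrt_pow2 v) at 1 by lra.
 apply sqrt_le_1_alt. pose proof (one_m_cos t).
 assert (0 <= 2/k) by (apply Rlt_le; apply Rdiv_lt_0_compat; lra).
 assert (0 <= 2/k*(1-cos t)) by (apply Rmult_le_pos; lra). lra. Qed.

Lemma Uf_pos k v t : 0 < k -> 0 < v -> 0 < Uf k v t.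
Proof. intros. pose proof (Uf_ge k v t). lra. Qed.

Lemma Uf_deriv k v t : 0 < k -> 0 < v -> is_derive (Uf k v) t (sin t / (k * Uf k v t)).
Proof. intros hk hv. pose proof (Uf_pos k v t hk hv). unfold Uf in *. auto_derive.
 - apply arg_pos; auto.
 - set (S := sqrt _) in *. change (v^2) with (v*(v*1)) in *. fold S. field. split; lra. Qed.

Lemma hf_cont k v t : 0 < k -> 0 < v -> continuous (hf k v) t.
Proof. intros hk hv. apply (ex_derive_continuous (V:=R_NormedModule) (hf k v)). pose proof (Uf_pos k v t hk hv).
 unfold hf, Uf in *. auto_derive. split. apply arg_pos; auto.
 split; auto. set (S := sqrt _) in *. change (v^2) with (v*(v*1)) in *. fold S. apply Rmult_integral_contrapositive; lra. Qed.

Lemma hf_ex_RInt k v a b : 0 < k -> 0 < v -> ex_RInt (hf k v) a b.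
Proof. intros. apply (ex_RInt_continuous (V:=R_CompleteNormedModule)). intros; apply hf_cont; auto. Qed.

Lemma Ff_deriv k v x : 0 < k -> 0 < v -> is_derive (Ff k v) x (hf k v x).
Proof. intros hk hv. unfold Ff. apply (is_derive_RInt (V:=R_CompleteNormedModule) _ _ 0).
 - apply filter_forall. intros b. apply RInt_correct. apply hf_ex_RInt; auto.
 - apply hf_cont; auto. Qed.

Lemma hf_lip k m v w t : 0 < k -> 0 < m -> m <= v -> m <= w ->
  Rabs (hf k v t - hf k w t) <= Rabs (v - w) / (k * (m*m)).
Proof. intros hk hm hv hw.
 pose proof (Uf_ge k v t hk ltac:(lra)) as HA. pose proof (Uf_ge k w t hk ltac:(lra)) as HB.
 pose proof (arg_pos k v t hk ltac:(lra)). pose proof (arg_pos k w t hk ltac:(lra)).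
 assert (HA2 : Uf k v t * Uf k v t = v^2 + 2/k*(1-cos t)) by (unfold Uf; apply sqrt_sqrt; lra).
 assert (HB2 : Uf k w t * Uf k w t = w^2 + 2/k*(1-cos t)) by (unfold Uf; apply sqrt_sqrt; lra).
 set (A := Uf k v t) in *. set (B := Uf k w t) in *.
 assert (Hd : Rabs (B - A) <= Rabs (v - w)).
 { assert (E : (B - A) * (B + A) = (w - v) * (w + v)) by nra.
   assert (E2 : Rabs (B - A) * (B + A) = Rabs (v - w) * (w + v)).
   { rewrite <- (Rabs_pos_eq (B+A)) by lra. rewrite <- (Rabs_pos_eq (w+v)) by lra.
     rewrite <- !Rabs_mult, E. rewrite <- Rabs_Ropp. f_equal. ring. }
   pose proof (Rabs_pos (v - w)). pose proof (Rabs_pos (B - A)). nra. }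
 assert (E : hf k v t - hf k w t = cos t * (B - A) / (k * (A * B))).
 { unfold hf. fold A B. field. split; lra. }
 rewrite E. unfold Rdiv. rewrite Rabs_mult, Rabs_mult, Rabs_Rinv by (apply Rmult_integral_contrapositive; split; try apply Rmult_integral_contrapositive; lra).
 rewrite (Rabs_pos_eq (k * (A*B))) by (apply Rmult_le_pos; [lra| apply Rmult_le_pos; lra]).
 apply Rmult_le_compat.
 - apply Rmult_le_pos; apply Rabs_pos.
 - apply Rlt_le, Rinv_0_lt_compat. apply Rmult_lt_0_compat; [lra| apply Rmult_lt_0_compat; lra].
 - pose proof (COS_bound t). assert (Rabs (cos t) <= 1) by (apply Rabs_le; lra).
   pose proof (Rabs_pos (B - A)). pose proof (Rabs_pos (cos t)). nra.
 - apply Rinv_le_contravar. apply Rmult_lt_0_compat; nra.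
   apply Rmult_le_compat_l; nra.
Qed.

Lemma Ff_cont k th v0 : 0 < k -> 0 <= th -> 0 < v0 ->
  filterlim (fun v => Ff k v th) (locally v0) (locally (Ff k v0 th)).
Proof. intros hk hth hv0. apply filterlim_locally. intros eps.
 set (m := v0/2).
 assert (hm : 0 < m) by (unfold m; lra).
 set (L := k*(m*m)). assert (hL : 0 < L) by (unfold L; apply Rmult_lt_0_compat; nra).
 assert (hd : 0 < Rmin m (eps * L / (th + 1))).
 { apply Rmin_pos; auto. apply Rdiv_lt_0_compat; [apply Rmult_lt_0_compat|]; try lra. apply cond_pos. }
 exists (mkposreal _ hd). intros v Hv. change (Rabs (v - v0) < Rmin m (eps * L / (th + 1))) in Hv.
 change (Rabs (Ff k v th - Ff k v0 th) < eps).
 assert (Hm1 := Rmin_l m (eps * L / (th + 1))). assert (Hm2 := Rmin_r m (eps * L / (th + 1))).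
 assert (hv : m <= v) by (unfold m in *; apply Rabs_def2 in Hv; lra).
 unfold Ff. 
 assert (E : RInt (hf k v) 0 th - RInt (hf k v0) 0 th = RInt (fun x => hf k v x - hf k v0 x) 0 th).
 { symmetry. apply (RInt_minus (V:=R_CompleteNormedModule)); apply hf_ex_RInt; lra. }
 rewrite E.
 eapply Rle_lt_trans. apply abs_RInt_le_const with (M := Rabs (v - v0) / L); auto.
 apply (ex_RInt_minus (V:=R_CompleteNormedModule)); apply hf_ex_RInt; lra.
 intros t _. apply hf_lip; unfold m in *; lra.
 rewrite Rminus_0_r.
 assert (Rabs (v - v0) / L < eps / (th + 1)).
 { apply (Rmult_lt_reg_r L); auto. unfold Rdiv. rewrite Rmult_assoc, Rinv_l by lra.
   rewrite Rmult_1_r. apply (Rlt_le_trans _ _ _ Hv). eapply Rle_trans. apply Hm2.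
   right. unfold Rdiv. ring. }
 assert (th * (Rabs (v - v0) / L) <= th * (eps / (th+1))).
 { apply Rmult_le_compat_l; lra. }
 assert (th * (eps / (th+1)) < eps).
 { pose proof (cond_pos eps). replace (th*(eps/(th+1))) with (eps - eps/(th+1)) by (field; lra).
   assert (0 < eps/(th+1)) by (apply Rdiv_lt_0_compat; lra). lra. }
 lra.
Qed.

Lemma cos_lb t : 0 <= t <= 1 -> 1 - t^2/2 <= cos t.
Proof. intros Ht. pose proof PI2_3_2. destruct (cos_bound t 0) as [Hc _]; try lra.
 replace (1 - t^2/2) with (cos_approx t (2*0+1)); auto.
 unfold cos_approx, cos_term. simpl. field. Qed.

Lemma hf_nonneg k v t : 0 < k -> 0 < v -> 0 <= t <= PI/2 -> 0 <= hf k v t.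
Proof. intros hk hv Ht. unfold hf. pose proof (Uf_pos k v t hk hv).
 apply Rdiv_le_0_compat. apply cos_ge_0; lra. apply Rmult_lt_0_compat; lra. Qed.

Lemma hf_pos k v t : 0 < k -> 0 < v -> - (PI/2) < t < PI/2 -> 0 < hf k v t.
Proof. intros hk hv Ht. unfold hf. pose proof (Uf_pos k v t hk hv).
 apply Rdiv_lt_0_compat. apply cos_gt_0; lra. apply Rmult_lt_0_compat; lra. Qed.

Lemma Ff_upper k v th : 0 < k -> 0 < v -> 0 <= th -> Ff k v th <= th / (k * v).
Proof. intros hk hv hth. unfold Ff. eapply Rle_trans. apply Rle_abs.
 eapply Rle_trans. apply abs_RInt_le_const with (M := 1/(k*v)); auto.
 apply hf_ex_RInt; auto.
 intros t _. unfold hf. pose proof (Uf_ge k v t hk hv). pose proof (COS_bound t).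
 unfold Rdiv. rewrite Rabs_mult, Rabs_Rinv by (apply Rgt_not_eq; apply Rmult_lt_0_compat; lra).
 rewrite (Rabs_pos_eq (k * _)) by (apply Rlt_le, Rmult_lt_0_compat; lra).
 rewrite Rmult_1_l. replace (/ (k*v)) with (1 * / (k*v)) by ring. apply Rmult_le_compat.
 apply Rabs_pos. apply Rlt_le, Rinv_0_lt_compat, Rmult_lt_0_compat; lra.
 apply Rabs_le; lra. apply Rinv_le_contravar. apply Rmult_lt_0_compat; lra.
 apply Rmult_le_compat_l; lra.
 right. unfold Rdiv. ring. Qed.

Lemma hf_lb k v s t : 0 < k -> 0 < v -> 0 < s -> s * s = / k -> 0 <= t <= 1 ->
  / (2 * (k * (v + s * t))) <= hf k v t.
Proof. intros hk hv hs hss Ht.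
 pose proof (cos_lb t Ht) as Hc. pose proof (Uf_pos k v t hk hv) as HU.
 assert (HUle : Uf k v t <= v + s * t).
 { unfold Uf. rewrite <- (sqrt_pow2 (v + s*t)) by nra. apply sqrt_le_1_alt.
   assert (2/k*(1-cos t) <= 2/k*(t^2/2)).
   { apply Rmult_le_compat_l. apply Rlt_le, Rdiv_lt_0_compat; lra. lra. }
   assert (2/k*(t^2/2) = (s*t)^2). { replace (2/k) with (2*(s*s)) by (rewrite hss; unfold Rdiv; ring). field. }
   assert (0 <= v*s*t) by (apply Rmult_le_pos; nra). nra. }
 unfold hf. set (U := Uf k v t) in *.
 apply Rle_trans with (/ (2 * (k * U))).
 - apply Rinv_le_contravar. nra. nra.
 - rewrite Rinv_mult. unfold Rdiv. apply Rmult_le_compat_r.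
   apply Rlt_le, Rinv_0_lt_compat, Rmult_lt_0_compat; lra. assert (t^2 <= 1) by nra. lra.
Qed.

Lemma Ff_lower k a th : 0 < k -> 0 < a -> 0 < th <= PI/2 -> exists v, 0 < v /\ a <= Ff k v th.
Proof. intros hk ha hth.
 set (s := / sqrt k).
 assert (hsk : 0 < sqrt k) by (apply sqrt_lt_R0; lra).
 assert (hs : 0 < s) by (unfold s; apply Rinv_0_lt_compat; lra).
 assert (hss : s * s = / k).
 { unfold s. rewrite <- Rinv_mult. rewrite sqrt_sqrt; lra. }
 set (d := Rmin th 1).
 assert (hd : 0 < d) by (unfold d; apply Rmin_pos; lra).
 assert (hd1 : d <= 1) by apply Rmin_r. assert (hd2 : d <= th) by apply Rmin_l.
 set (v := s*d*exp(-(2*k*s*a))).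
 assert (hv : 0 < v) by (unfold v; pose proof (exp_pos (-(2*k*s*a))); apply Rmult_lt_0_compat; nra).
 exists v. split; auto.
 set (g := fun t => / (2 * (k * (v + s * t)))).
 set (G := fun t => ln (v + s * t) / (2 * k * s)).
 assert (HI : is_RInt g 0 d (G d - G 0)).
 { apply (is_RInt_derive (V:=R_CompleteNormedModule) G g).
   - intros x Hx. rewrite Rmin_left in Hx by lra. rewrite Rmax_right in Hx by lra.
     unfold G, g. assert (0 < v + s*x) by nra. auto_derive. lra. field. repeat split; lra.
   - intros x Hx. rewrite Rmin_left in Hx by lra. rewrite Rmax_right in Hx by lra.
     apply (ex_derive_continuous (V:=R_NormedModule) g). unfold g. auto_derive. apply Rgt_not_eq; apply Rmult_lt_0_compat; [lra| apply Rmult_lt_0_compat; nra]. }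
 assert (Hg : RInt g 0 d = G d - G 0) by (apply is_RInt_unique; exact HI).
 assert (H1 : RInt g 0 d <= RInt (hf k v) 0 d).
 { apply RInt_le. lra. exists (G d - G 0); exact HI. apply hf_ex_RInt; auto.
   intros x Hx. apply (hf_lb k v s x); auto; lra. }
 assert (H2 : 0 <= RInt (hf k v) d th).
 { apply RInt_ge_0. lra. apply hf_ex_RInt; auto. intros x Hx. apply hf_nonneg; auto; lra. }
 assert (H3 : RInt (hf k v) 0 d + RInt (hf k v) d th = Ff k v th).
 { unfold Ff. apply (RInt_Chasles (V:=R_CompleteNormedModule)); apply hf_ex_RInt; auto. }
 assert (H4 : a <= G d - G 0).
 { unfold G. rewrite Rmult_0_r, Rplus_0_r.
   assert (E : ln v = ln (s*d) - 2*k*s*a).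
   { unfold v. rewrite ln_mult, ln_exp. ring. nra. apply exp_pos. }
   assert (ln (s*d) < ln (v + s*d)) by (apply ln_increasing; nra).
   rewrite E. apply (Rmult_le_reg_r (2*k*s)). nra.
   unfold Rdiv. rewrite Rmult_minus_distr_r, !Rmult_assoc, Rinv_l by nra. nra. }
 lra.
Qed.

Lemma sinpsi_tan y : 0 < cos y -> tan y / sqrt (1 + (tan y)^2) = sin y.
Proof. intros hc.
 assert (E : 1 + (tan y)^2 = (/ cos y)^2).
 { unfold tan. replace (1 + (sin y/cos y)^2) with ((sin y ^2 + cos y^2) * (/cos y)^2) by (field; lra).
   replace (sin y^2 + cos y^2) with 1 by (rewrite <- (sin2_cos2 y); unfold Rsqr; ring). ring. }
 rewrite E, sqrt_pow2 by (apply Rlt_le, Rinv_0_lt_compat; lra).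
 unfold tan. field. lra. Qed.

Lemma construct k u0 th a : 0 < k -> 0 < u0 -> 0 < th <= PI/2 -> 0 < a -> Ff k u0 th = a ->
  exists u du : R -> R, cyl_solution k u0 a u du /\
      filterlim (sinpsi du) (at_left a) (locally (sin th)).
Proof. intros hk hu0 hth ha Ha.
 set (f := Ff k u0). set (h := hf k u0).
 assert (fder : forall x, is_derive f x (h x)) by (intros; apply Ff_deriv; auto).
 assert (fder' : forall x, derivable_pt_lim f x (h x)) by (intros; apply is_derive_Reals; auto).
 assert (fcont : forall x, continuity_pt f x).
 { intros x. apply derivable_continuous_pt. exists (h x). apply fder'. }
 assert (f0 : f 0 = 0) by (unfold f, Ff; apply (RInt_point (V:=R_CompleteNormedModule))).
 assert (finc : forall x y, -th <= x -> x < y -> y <= th -> f x < f y).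
 { intros x y H1 H2 H3. destruct (MVT_cor2 f h x y H2 (fun c _ => fder' c)) as [c [Hc1 Hc2]].
   assert (0 < h c) by (apply hf_pos; auto; lra). nra. }
 assert (fle : forall x y, -th <= x -> x <= y -> y <= th -> f x <= f y).
 { intros x y H1 H2 H3. destruct H2. apply Rlt_le, finc; auto. subst; lra. }
 set (b := - f (-th)).
 assert (hb : 0 < b) by (unfold b; assert (f (-th) < f 0) by (apply finc; lra); lra).
 assert (fth : f th = a) by exact Ha.
 assert (fmth : f (-th) = -b) by (unfold b; ring).
 set (g := fun r => epsilon (inhabits 0) (fun x => -th <= x <= th /\ f x = r)).
 assert (gspec : forall r, -b <= r <= a -> -th <= g r <= th /\ f (g r) = r).
 { intros r Hr. unfold g. apply epsilon_spec.
   destruct (f_interv_is_interv f (-th) th r ltac:(lra) ltac:(lra) (fun x _ => fcont x)) as [x Hx].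
   exists x; auto. }
 assert (finj : forall x y, -th <= x <= th -> -th <= y <= th -> f x = f y -> x = y).
 { intros x y Hx Hy E. destruct (Rtotal_order x y) as [H|[H|H]]; auto.
   - pose proof (finc x y ltac:(lra) H ltac:(lra)); lra.
   - pose proof (finc y x ltac:(lra) H ltac:(lra)); lra. }
 assert (gf : forall x, -th <= x <= th -> g (f x) = x).
 { intros x Hx. assert (-b <= f x <= a) by (rewrite <- fmth, <- fth; split; apply fle; lra).
   destruct (gspec (f x) H). apply finj; auto. }
 assert (g0 : g 0 = 0) by (pose proof (gf 0 ltac:(lra)) as G; rewrite f0 in G; exact G).
 assert (gmb : g (-b) = -th) by (rewrite <- fmth; apply gf; lra).
 assert (ga : g a = th) by (rewrite <- fth; apply gf; lra).
 assert (gint : forall r, -b < r < a -> -th < g r < th).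
 { intros r Hr. destruct (gspec r ltac:(lra)) as [[H1 H2] H3]. split.
   - destruct H1; auto. rewrite <- H in H3. lra.
   - destruct H2; auto. rewrite H in H3. lra. }
 assert (gcos : forall r, -b < r < a -> 0 < cos (g r)).
 { intros r Hr. apply cos_gt_0; pose proof (gint r Hr); lra. }
 assert (gcont : forall r, -b < r < a -> continuity_pt g r).
 { intros r Hr. apply (continuity_pt_recip_interv f g (-th) th ltac:(lra)).
   - intros; apply finc; auto.
   - intros x H1 H2. unfold comp, id. apply gspec; lra.
   - intros x H1 H2. apply gspec; lra.
   - intros; apply fcont.
   - lra. }
 assert (gder : forall r, -b < r < a -> is_derive g r (1 / h (g r))).
 { intros r Hr. apply is_derive_Reals.
   set (Prf := fun (a0 : R) (_ : g (-b) <= a0 <= g a) => exist (fun l => derivable_pt_lim f a0 l) (h a0) (fder' a0) : derivable_pt f a0).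
   assert (Pi : g (-b) <= g r <= g a) by (pose proof (gint r Hr); lra).
   pose proof (derivable_pt_lim_recip_interv f g (-b) a r Prf (gcont r Hr) ltac:(lra) Hr Pi) as D.
   apply D.
   - intros x Hx. unfold comp, id. apply gspec; lra.
   - simpl. apply Rgt_not_eq. apply hf_pos; auto. pose proof (gint r Hr); lra. }
 set (u := fun r => Uf k u0 (g r)).
 set (du := fun r => tan (g r)).
 assert (loc : forall r, -b < r < a -> locally r (fun x => -b < x < a)).
 { intros r Hr. apply (open_and _ _ (open_gt (-b)) (open_lt a)). auto. }
 exists u, du. split; [split; [|split]|].
 - unfold u. rewrite g0. unfold Uf. rewrite cos_0. replace (u0^2 + 2/k*(1-1)) with (u0^2) by ring.
   apply sqrt_pow2; lra.
 - unfold du. rewrite g0. apply tan_0.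
 - intros r Hr. assert (Hr' : -b < r < a) by lra. split.
   + pose proof (is_derive_comp (Uf k u0) g r _ _ (Uf_deriv k u0 (g r) hk hu0) (gder r Hr')) as D.
     replace (du r) with (scal (1 / h (g r)) (sin (g r) / (k * Uf k u0 (g r)))). exact D.
     unfold scal; simpl; unfold mult; simpl. unfold du, h, hf, tan.
     pose proof (gcos r Hr'). pose proof (Uf_pos k u0 (g r) hk hu0). field. split; lra.
   + pose proof (is_derive_comp sin g r _ _ (is_derive_sin (g r)) (gder r Hr')) as D.
     apply (is_derive_ext_loc (fun x => sin (g x))).
     { apply (filter_imp (fun x => -b < x < a)); [|apply loc; auto].
       intros x Hx. unfold sinpsi, du. rewrite sinpsi_tan; auto. }
     replace (k * u r) with (scal (1 / h (g r)) (cos (g r))). exact D.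
     unfold scal; simpl; unfold mult; simpl. unfold u, h, hf.
     pose proof (gcos r Hr'). pose proof (Uf_pos k u0 (g r) hk hu0). field. split; lra.
 - apply (filterlim_ext_loc (fun x => sin (g x))).
   { unfold at_left, within. apply (filter_imp (fun x => -b < x)).
     intros x H1 H2. unfold sinpsi, du. symmetry. apply sinpsi_tan. apply gcos. lra.
     apply (open_gt (-b)). lra. }
   apply (filterlim_comp _ _ _ g sin _ (locally th)).
   + apply filterlim_locally. intros eps.
     pose proof (cond_pos eps) as he.
     set (t := th - Rmin (eps/2) th).
     assert (ht : 0 <= t < th) by (unfold t; pose proof (Rmin_l (eps/2) th); pose proof (Rmin_r (eps/2) th);
        assert (0 < Rmin (eps/2) th) by (apply Rmin_pos; lra); lra).
     assert (ft : f t < a) by (rewrite <- fth; apply finc; lra).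
     assert (ft0 : 0 <= f t) by (assert (f 0 <= f t) by (apply fle; lra); lra).
     assert (hd : 0 < a - f t) by lra.
     unfold at_left, within. exists (mkposreal _ hd). intros y Hy Hya.
     change (Rabs (y - a) < a - f t) in Hy. apply Rabs_def2 in Hy.
     destruct (gspec y ltac:(lra)) as [Hg1 Hg2].
     assert (t < g y).
     { destruct (Rlt_le_dec t (g y)) as [H|H]; auto.
       assert (f (g y) <= f t) by (apply fle; lra). lra. }
     change (Rabs (g y - th) < eps). apply Rabs_def1.
     * lra.
     * unfold t in H. pose proof (Rmin_l (eps/2) th). lra.
   + apply continuity_pt_filterlim. apply continuity_sin.
Qed.

Theorem mainTheorem8 (kappa a gamma : R)
  (hk : 0 < kappa) (ha : 0 < a) (hg0 : 0 <= gamma) (hg1 : gamma < PI / 2) :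
  exists u0 : R, 0 < u0 /\
    exists u du : R -> R, cyl_solution kappa u0 a u du /\
      filterlim (sinpsi du) (at_left a) (locally (cos gamma)).
Proof.
 set (th := PI/2 - gamma).
 assert (hth : 0 < th <= PI/2) by (unfold th; lra).
 destruct (Ff_lower kappa a th hk ha hth) as [v1 [hv1 Hv1]].
 set (u2 := v1 + th / (kappa * a)).
 assert (hq : 0 < th / (kappa * a)) by (apply Rdiv_lt_0_compat; [lra| apply Rmult_lt_0_compat; lra]).
 assert (hu2 : 0 < u2) by (unfold u2; lra).
 assert (Hu2 : Ff kappa u2 th <= a).
 { eapply Rle_trans. apply Ff_upper; lra.
   apply (Rmult_le_reg_r (kappa * u2)). apply Rmult_lt_0_compat; lra.
   unfold Rdiv. rewrite Rmult_assoc, Rinv_l by (apply Rgt_not_eq, Rmult_lt_0_compat; lra).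
   rewrite Rmult_1_r. unfold u2.
   replace (a * (kappa * (v1 + th / (kappa * a)))) with (a * kappa * v1 + th) by (field; lra).
   assert (0 < a * kappa * v1) by (apply Rmult_lt_0_compat; [apply Rmult_lt_0_compat|]; lra). lra. }
 destruct (f_interv_is_interv (fun v => - Ff kappa v th) v1 u2 (-a)) as [u0 [Hu0 E]].
 - unfold u2; lra.
 - lra.
 - intros x Hx. apply (continuity_pt_opp (fun v => Ff kappa v th)).
   apply continuity_pt_filterlim. apply Ff_cont; lra.
 - exists u0. split. lra.
   rewrite <- sin_shift. fold th.
   apply construct; auto. lra. lra.
Qed.
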